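(* Let $k\ge 1$ and let $G$ be a minimally $k$-connected graph with $n$ vertices and $m$ edges. Then $$|V_k|\ge (k+1)n-2m.$$
   Context: All graphs are finite, simple and undirected. A $k$-separator is a set of $k\ge 0$ vertices whose deletion leaves a disconnected graph. A graph is $k$-connected if it has more than $k$ vertices and contains no $(k-1)$-separator. A $k$-connected graph $G$ is minimally $k$-connected if $G-e$ is not $k$-connected for every edge $e$. $V_k$ denotes the set of vertices of $G$ of degree exactly $k$. *)

(* Defs.v *)
From mathcomp Require Import all_boot.
Set Implicit Arguments. Unset Strict Implicit. Unset Printing Implicit Defensive.

Definition simple_graph (T : finType) (e : rel T) : Prop :=
  symmetric e /\ irreflexive e.

Definition del_vertices (T : finType) (e : rel T) (S : {set T}) : rel T :=
  [rel x y | [&& e x y, x \notin S & y \notin S]].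

Definition disconnected_after (T : finType) (e : rel T) (S : {set T}) : Prop :=
  exists x y, [/\ x \notin S, y \notin S & ~~ connect (del_vertices e S) x y].

Definition separator (T : finType) (e : rel T) (j : nat) (S : {set T}) : Prop :=
  #|S| = j /\ disconnected_after e S.

(* G is k-connected: more than k vertices and no (k-1)-separator
   (for k = 0 there are no (-1)-separators, encoded by #|S| + 1 = k). *)
Definition k_connected (T : finType) (e : rel T) (k : nat) : Prop :=
  k < #|T| /\ forall S : {set T}, #|S|.+1 = k -> ~ disconnected_after e S.

Definition del_edge (T : finType) (e : rel T) (u v : T) : rel T :=
  [rel x y | e x y && ~~ (((x == u) && (y == v)) || ((x == v) && (y == u)))].

Definition minimally_k_connected (T : finType) (e : rel T) (k : nat) : Prop :=
  k_connected e k /\ forall u v, e u v -> ~ k_connected (del_edge e u v) k.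

Definition degree (T : finType) (e : rel T) (x : T) : nat := #|[set y | e x y]|.

Definition V_deg (T : finType) (e : rel T) (k : nat) : {set T} :=
  [set x | degree e x == k].

Definition edge_set (T : finType) (e : rel T) : {set {set T}} :=
  [set E : {set T} | [exists u, exists v, e u v && (E == [set u; v])]].

Definition num_edges (T : finType) (e : rel T) : nat := #|edge_set e|.

(* Main.v *)
Require Import Defs.
From mathcomp Require Import all_boot.
Set Implicit Arguments. Unset Strict Implicit.

Lemma mid_set (T : finType) (C : {set T}) : forall d (N : {set T}),
  N \subset C -> #|N| + d <= #|C| ->
  exists S : {set T}, [/\ N \subset S, S \subset C & #|S| = #|N| + d].
Proof.
elim=> [|d IH] N sNC hc.
  by exists N; rewrite addn0.
have : 0 < #|C :\: N| by rewrite cardsD (setIidPr sNC) subn_gt0; apply: leq_trans hc; rewrite addnS ltnS leq_addr.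
case/card_gt0P=> z; rewrite inE => /andP [zN zC].
have s1 : z |: N \subset C by rewrite subUset sub1set zC.
have s2 : #|z |: N| + d <= #|C| by rewrite cardsU1 zN add1n addSnnS.
have [S [h1 h2 h3]] := IH (z |: N) s1 s2.
exists S; split => //; first by apply: subset_trans h1; apply: subsetUr.
by rewrite h3 cardsU1 zN add1n -addSnnS.
Qed.

Lemma deg_ge (T : finType) (e : rel T) (k : nat) :
  irreflexive e -> 1 <= k -> k_connected e k -> forall x, k <= degree e x.
Proof.
move=> irr k1 [nk kc] x; rewrite leqNgt; apply/negP => dk.
set N := [set y | e x y].
have sNC : N \subset [set~ x].
  apply/subsetP=> y; rewrite !inE => exy; apply/eqP=> yx.
  by rewrite yx irr in exy.
have hN : #|N| + (k.-1 - #|N|) <= #|[set~ x]|.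
  rewrite subnKC; last by rewrite -ltnS prednK.
  rewrite cardsC1 -ltnS prednK // prednK //.
  - exact: ltnW.
  - exact: leq_ltn_trans nk.
have [S [h1 h2 h3]] := mid_set sNC hN.
rewrite subnKC in h3; last by rewrite -ltnS prednK.
apply: (kc S); first by rewrite h3 prednK.
have : 1 < #|~: S|.
  by rewrite cardsCs setCK h3 ltn_subRL addn1 prednK.
rewrite (cardD1 x) inE.
have xS : x \notin S by apply/negP => /(subsetP h2); rewrite !inE eqxx.
rewrite xS add1n ltnS => /card_gt0P [y]; rewrite !inE => /andP [yx yS].
exists x, y; split => //.
apply/negP=> /connectP [[|z p]] /=.
  by move=> _ yx'; rewrite yx' eqxx in yx.
rewrite /del_vertices /= => /andP [/and3P [exz _ zS] _] _.
by move: zS; rewrite (subsetP h1) // inE.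
Qed.

Lemma handshake (T : finType) (e : rel T) :
  irreflexive e -> \sum_x degree e x <= 2 * num_edges e.
Proof.
move=> irr.
have -> : \sum_x degree e x = \sum_(p : T * T | e p.1 p.2) 1.
  rewrite -(pair_big_dep xpredT (fun x y => e x y) (fun _ _ => 1)) /=.
  by apply: eq_bigr => x _; rewrite /degree -sum1_card; apply: eq_bigl => y; rewrite inE.
rewrite (partition_big (fun p : T * T => [set p.1; p.2]) (mem (edge_set e))) /=; last first.
  by case=> u v /= euv; rewrite inE; apply/existsP; exists u; apply/existsP; exists v; rewrite euv eqxx.
rewrite /num_edges -sum1_card big_distrr /=.
apply: leq_sum => E; rewrite inE => /existsP [u /existsP [v /andP [euv /eqP ->]]].
rewrite muln1.
apply: (@leq_trans #|[set (u, v); (v, u)]|); last by rewrite cards2 ltnS leq_b1.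
rewrite -sum1_card [X in _ <= X]big_mkcond [X in X <= _]big_mkcond /=; apply: leq_sum => -[a b] _.
case: ifP => // /andP [eab /eqP hE] /=; rewrite -[in X in _ <= X]/(nat_of_bool true); case: ifP => // /negbT; apply: contraNT => _.

have ha : a \in [set u; v] by rewrite -hE !inE eqxx.
have hb : b \in [set u; v] by rewrite -hE !inE eqxx orbT.
have ab : a != b by apply/eqP => hab; rewrite hab irr in eab.
move: ha hb ab; rewrite !inE => /orP [] /eqP -> /orP [] /eqP ->; rewrite ?eqxx ?orbT //.
Qed.

Theorem mainTheorem3 (T : finType) (e : rel T) (k : nat) :
  simple_graph e -> 1 <= k -> minimally_k_connected e k ->
  k.+1 * #|T| <= #|V_deg e k| + 2 * num_edges e.
Proof.
move=> [_ irr] k1 [kc _].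
apply: (leq_trans _ (leq_add (leqnn _) (handshake irr))).
rewrite -sum1_card [X in _ <= X + _]big_mkcond -big_split /= mulnC -sum_nat_const.
apply: leq_sum => x _.
have := deg_ge irr k1 kc x; rewrite /V_deg inE leq_eqVlt => /orP [/eqP <-|] .
  by rewrite eqxx add1n.
by move=> h; rewrite (gtn_eqF h) add0n.
Qed.
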